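(* Let $G$ be a topological group and $H$ a closed subgroup of finite index in $G$. Let $(\operatorname{Bohr}(G),\beta)$ be the Bohr compactification of $G$ and set $K=\overline{\beta(H)}$. Then: (i) $K$ is a subgroup of finite index in $\operatorname{Bohr}(G)$; (ii) $(K,\beta|_H)$ is a Bohr compactification of $H$; (iii) $K$ and $\operatorname{Bohr}(G)$ have the same connected component of the identity.
   Context: A Bohr compactification of a topological group $G$ is a pair $(\operatorname{Bohr}(G),\beta)$ with $\operatorname{Bohr}(G)$ compact and $\beta$ a continuous homomorphism with dense image such that every continuous homomorphism from $G$ to a compact group $L$ factors as $\alpha'\circ\beta$ with $\alpha':\operatorname{Bohr}(G)\to L$ continuous. *)

(* Defs.v *)
From HB Require Import structures.
From mathcomp Require Import all_boot all_algebra all_classical.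
From mathcomp Require Import topology.

Set Implicit Arguments.
Unset Strict Implicit.
Unset Printing Implicit Defensive.

Local Open Scope classical_set_scope.

Record topological_group (T : topologicalType) (mul : T -> T -> T)
    (inv : T -> T) (one : T) : Prop := TopologicalGroup {
  tg_mulA : forall x y z, mul x (mul y z) = mul (mul x y) z;
  tg_mul1g : forall x, mul one x = x;
  tg_mulVg : forall x, mul (inv x) x = one;
  tg_mul_cont : continuous (fun p : T * T => mul p.1 p.2);
  tg_inv_cont : continuous inv }.

Definition compact_group (T : topologicalType) (mul : T -> T -> T)
    (inv : T -> T) (one : T) : Prop :=
  [/\ topological_group mul inv one, compact [set: T] & hausdorff_space T].

Definition group_hom (T U : Type) (mulT : T -> T -> T) (mulU : U -> U -> U)
    (f : T -> U) : Prop :=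
  forall x y, f (mulT x y) = mulU (f x) (f y).

Definition bohr_compactification (G : topologicalType) (mulG : G -> G -> G)
    (invG : G -> G) (oneG : G)
    (B : topologicalType) (mulB : B -> B -> B) (invB : B -> B) (oneB : B)
    (beta : G -> B) : Prop :=
  [/\ compact_group mulB invB oneB,
      continuous beta,
      group_hom mulG mulB beta,
      dense (range beta) &
      forall (L : topologicalType) (mulL : L -> L -> L) (invL : L -> L)
             (oneL : L) (alpha : G -> L),
        compact_group mulL invL oneL -> continuous alpha ->
        group_hom mulG mulL alpha ->
        exists alpha' : B -> L, continuous alpha' /\ alpha = alpha' \o beta].

Record subgroup (T : Type) (mul : T -> T -> T) (inv : T -> T) (one : T)
    (H : set T) : Prop := Subgroup {
  sg_one : H one;
  sg_mul : forall x y, H x -> H y -> H (mul x y);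
  sg_inv : forall x, H x -> H (inv x) }.

Definition finite_index (T : Type) (mul : T -> T -> T) (H : set T) : Prop :=
  finite_set [set mul x @` H | x in [set: T]].

Section SubgroupOps.
Context (T : Type) (mul : T -> T -> T) (inv : T -> T) (one : T) (H : set T)
  (hH : subgroup mul inv one H).

Definition sub_mul (x y : set_type H) : set_type H :=
  exist _ (mul (val x) (val y))
    (mem_set (sg_mul hH (set_valP x) (set_valP y))).

Definition sub_inv (x : set_type H) : set_type H :=
  exist _ (inv (val x)) (mem_set (sg_inv hH (set_valP x))).

Definition sub_one : set_type H := exist _ one (mem_set (sg_one hH)).
End SubgroupOps.

Definition restr_to_closure (G B : topologicalType) (beta : G -> B) (H : set G)
    (h : set_type H) : set_type (closure (beta @` H)) :=
  exist _ (beta (val h))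
    (mem_set (@subset_closure B (beta @` H) _ (imageP beta (set_valP h)))).
Arguments restr_to_closure {G B} beta H h.

(* Main.v *)
Require Import Defs.
From HB Require Import structures.
From mathcomp Require Import all_boot all_algebra all_fingroup all_classical.
From mathcomp Require Import topology.
Set Implicit Arguments. Unset Strict Implicit. Unset Printing Implicit Defensive.
Local Open Scope classical_set_scope.


Lemma cont_pair (X Y Z : topologicalType) (f : X -> Y) (g : X -> Z) :
  continuous f -> continuous g -> continuous (fun x => (f x, g x)).
Proof. by move=> cf cg x; apply: cvg_pair; [exact: cf| exact: cg]. Qed.
Lemma cont_pair_at (X Y Z : topologicalType) (f : X -> Y) (g : X -> Z) x :
  {for x, continuous f} -> {for x, continuous g} -> {for x, continuous (fun x => (f x, g x))}.
Proof. by move=> cf cg; apply: cvg_pair; [exact: cf| exact: cg]. Qed.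
Lemma cont_cst (X Y : topologicalType) (c : Y) : continuous (fun _ : X => c).
Proof. by move=> x; exact: cvg_cst. Qed.
Lemma cont_id (X : topologicalType) : continuous (fun x : X => x).
Proof. by move=> x; exact: cvg_id. Qed.
Lemma cont_comp (X Y Z : topologicalType) (f : X -> Y) (g : Y -> Z) :
  continuous f -> continuous g -> continuous (fun x => g (f x)).
Proof. by move=> cf cg x; exact: (continuous_comp (cf x) (cg _)). Qed.
Lemma cont_fst (X Y : topologicalType) : continuous (@fst X Y).
Proof. by move=> x; exact: cvg_fst. Qed.
Lemma cont_snd (X Y : topologicalType) : continuous (@snd X Y).
Proof. by move=> x; exact: cvg_snd. Qed.

Lemma sub_cont_at (X Y : topologicalType) (A : set Y) (g : X -> set_type A) x :
  {for x, continuous (fun x => val (g x))} -> {for x, continuous g}.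
Proof.
move=> cg U; rewrite nbhsE => -[O [oO Ogx] OU].
case: oO => V oV VO.
have : nbhs (val (g x)) V.
  apply: open_nbhs_nbhs; split => //.
  by move: Ogx; rewrite -VO.
move=> nV; have hV := cg _ nV.
apply: (@filterS _ _ _ ((fun x => \val (g x)) @^-1` V)) hV => y Vy.
by apply: OU; rewrite -VO; exact: Vy.
Qed.

Lemma sub_cont (X Y : topologicalType) (A : set Y) (g : X -> set_type A) :
  continuous (fun x => val (g x)) -> continuous g.
Proof. by move=> cg x; apply: sub_cont_at; exact: cg. Qed.

Lemma val_cont (Y : topologicalType) (A : set Y) : continuous (fun x : set_type A => val x).
Proof. exact: initial_continuous. Qed.

Lemma cluster_cont (X Y : topologicalType) (f : X -> Y) p q :
  continuous f -> cluster (nbhs p) q -> cluster (nbhs (f p)) (f q).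
Proof.
move=> cf cl A B nA nB.
have [z [Az Bz]] := cl _ _ (cf p _ nA) (cf q _ nB).
by exists (f z).
Qed.

Lemma hausdorff_pair (X Y : topologicalType) :
  hausdorff_space X -> hausdorff_space Y -> hausdorff_space (X * Y)%type.
Proof.
move=> hX hY [p1 p2] [q1 q2] cl.
have e1 := hX _ _ (cluster_cont (@cont_fst X Y) cl).
have e2 := hY _ _ (cluster_cont (@cont_snd X Y) cl).
by rewrite /= in e1 e2; rewrite e1 e2.
Qed.

Lemma hausdorff_sub (Y : topologicalType) (A : set Y) :
  hausdorff_space Y -> hausdorff_space (set_type A).
Proof.
move=> hY p q cl; apply: val_inj.
exact: hY _ _ (cluster_cont (@val_cont Y A) cl).
Qed.

Lemma compact_sub (Y : topologicalType) (A : set Y) :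
  compact A -> compact [set: set_type A].
Proof.
move=> cA F PF _.
have PG : ProperFilter (fmap (fun x : set_type A => val x) F) by exact: fmap_proper_filter.
have GA : (fmap (fun x : set_type A => val x) F) A.
  by rewrite /fmap /=; apply: filterS filterT => x _; exact: set_valP.
have [b [Ab clb]] := cA _ PG GA.
exists (exist _ b (mem_set Ab)); split => //.
move=> U N FU nN.
rewrite nbhsE in nN; case: nN => O [[V oV VO] Ok] ON.
have nV : nbhs b V.
  by apply: open_nbhs_nbhs; split => //; move: Ok; rewrite -VO.
have GU : (fmap (fun x : set_type A => val x) F) ((fun x : set_type A => val x) @` U).
  by rewrite /fmap /=; apply: filterS FU => x Ux; exists x.
have [_ [[a Ua <-] Va]] := clb _ _ GU nV.
exists a; split => //; apply: ON; rewrite -VO; exact: Va.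
Qed.

Lemma cont_closure (X Y : topologicalType) (f : X -> Y) (A : set X) x :
  continuous f -> closure A x -> closure (f @` A) (f x).
Proof.
move=> cf clx N nN.
have [a [Aa Na]] := clx _ (cf x _ nN).
by exists (f a); split => //; exists a.
Qed.

Lemma closure_sub_closed (X : topologicalType) (A C : set X) :
  closed C -> A `<=` C -> closure A `<=` C.
Proof.
by move=> cC AC; rewrite (closure_id C).1 //; exact: closureS.
Qed.

Lemma dense_closureT (X : topologicalType) (S : set X) :
  dense S -> closure S = setT.
Proof.
move=> dS; apply/seteqP; split => // b _ N; rewrite nbhsE => -[O [oO Ob] ON].
have [z [Oz Sz]] : O `&` S !=set0 by apply: dS => //; exists b.
by exists z; split => //; exact: ON.
Qed.

Section TG.
Context (T : topologicalType) (mul : T -> T -> T) (inv : T -> T) (one : T)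
  (hT : topological_group mul inv one).
Let mA := tg_mulA hT.
Let m1 := tg_mul1g hT.
Let mV := tg_mulVg hT.

Lemma g_mulgV x : mul x (inv x) = one.
Proof.
have e : mul (inv (inv x)) (inv x) = one := mV (inv x).
by rewrite -[mul x _]m1 -e -mA [mul (inv x) (mul x _)]mA mV m1 e.
Qed.
Lemma g_mulg1 x : mul x one = x.
Proof. by rewrite -(mV x) mA g_mulgV m1. Qed.
Lemma g_mulKg x y : mul (inv x) (mul x y) = y.
Proof. by rewrite mA mV m1. Qed.
Lemma g_mulKVg x y : mul x (mul (inv x) y) = y.
Proof. by rewrite mA g_mulgV m1. Qed.
Lemma g_mulgK x y : mul (mul y x) (inv x) = y.
Proof. by rewrite -mA g_mulgV g_mulg1. Qed.
Lemma g_mulgKV x y : mul (mul y (inv x)) x = y.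
Proof. by rewrite -mA mV g_mulg1. Qed.
Lemma g_inv_uniq x y : mul x y = one -> inv x = y.
Proof. by move=> e; rewrite -[inv x]g_mulg1 -e g_mulKg. Qed.
Lemma g_invK x : inv (inv x) = x.
Proof. by apply: g_inv_uniq; rewrite mV. Qed.
Lemma g_inv1 : inv one = one.
Proof. by apply: g_inv_uniq; rewrite m1. Qed.
Lemma g_invM x y : inv (mul x y) = mul (inv y) (inv x).
Proof. by apply: g_inv_uniq; rewrite -mA g_mulKVg g_mulgV. Qed.
Lemma g_mulI x y z : mul x y = mul x z -> y = z.
Proof. by move=> e; rewrite -(g_mulKg x y) e g_mulKg. Qed.

Lemma g_mul_cont2 (X : topologicalType) (f g : X -> T) : continuous f -> continuous g ->
  continuous (fun x => mul (f x) (g x)).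
Proof. move=> cf cg; exact: (cont_comp (cont_pair cf cg) (tg_mul_cont hT)). Qed.
Lemma g_mul_cont2_at (X : topologicalType) (f g : X -> T) x :
  {for x, continuous f} -> {for x, continuous g} ->
  {for x, continuous (fun x => mul (f x) (g x))}.
Proof.
move=> cf cg.
have hm : continuous (fun p : T * T => mul p.1 p.2) := tg_mul_cont hT.
exact (continuous_comp (cont_pair_at cf cg) (hm (f x, g x))).
Qed.
Lemma g_lmul_cont a : continuous (mul a).
Proof. exact (g_mul_cont2 (@cont_cst T T a) (@cont_id T)). Qed.
Lemma g_rmul_cont a : continuous (fun x => mul x a).
Proof. exact (g_mul_cont2 (@cont_id T) (@cont_cst T T a)). Qed.

Lemma g_lmul_image a (S : set T) : mul a @` S = mul (inv a) @^-1` S.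
Proof.
apply/seteqP; split => x.
  by case=> y Sy <-; rewrite /= g_mulKg.
by move=> Sx; exists (mul (inv a) x) => //; rewrite g_mulKVg.
Qed.

Lemma g_lmul_closed a (S : set T) : closed S -> closed (mul a @` S).
Proof.
by move=> cS; rewrite g_lmul_image; move/continuous_closedP: (g_lmul_cont (a:=inv a)); apply.
Qed.

Lemma subgroup_closure (S : set T) : subgroup mul inv one S ->
  subgroup mul inv one (closure S).
Proof.
move=> hS.
have step1 a b : S a -> closure S b -> closure S (mul a b).
  move=> Sa clb; apply: (closure_sub_closed (@closed_closure _ _) _ (cont_closure (g_lmul_cont (a:=a)) clb)).
  by move=> _ [y Sy <-]; exact: (@subset_closure T S _ (sg_mul hS Sa Sy)).
split.
- exact: (@subset_closure T S _ (sg_one hS)).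
- move=> x y clx cly.
  apply: (closure_sub_closed (@closed_closure _ _) _ (cont_closure (g_rmul_cont (a:=y)) clx)).
  by move=> _ [z Sz <-]; exact: step1.
- move=> x clx.
  apply: (closure_sub_closed (@closed_closure _ _) _ (cont_closure (tg_inv_cont hT) clx)).
  by move=> _ [z Sz <-]; exact: (@subset_closure T S _ (sg_inv hS Sz)).
Qed.

Lemma g_cosetE (S : set T) x y : subgroup mul inv one S ->
  (mul x @` S = mul y @` S) <-> S (mul (inv x) y).
Proof.
move=> hS; split.
  move=> e; have : (mul y @` S) y.
    by exists one; [exact: (sg_one hS) | exact: g_mulg1].
  by rewrite -e => -[z Sz <-]; rewrite g_mulKg.
have sub a b : S (mul (inv a) b) -> mul b @` S `<=` mul a @` S.
  move=> Sab _ [z Sz <-]; exists (mul (mul (inv a) b) z).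
    by have := sg_mul hS Sab Sz.
  by rewrite mA g_mulKVg.
move=> Sxy; apply/seteqP; split; apply: sub => //.
by have := sg_inv hS Sxy; rewrite g_invM g_invK.
Qed.

Lemma subgroup_open_of_cover (S : set T) (I : finType) (c : I -> T) :
  subgroup mul inv one S -> closed S ->
  (forall x, exists i, S (mul (inv (c i)) x)) -> open S.
Proof.
move=> hS cS cov.
pose F := fun i => if `[< S (c i) >] then set0 else mul (c i) @` S.
have -> : S = ~` (\bigcup_(i in [set` enum I]) F i).
  apply/seteqP; split => x.
    move=> Sx [i _]; rewrite /F; case: asboolP => [//|nS] [s Ss e].
    apply: nS; rewrite -[c i](g_mulgK s) e.
    by have := sg_mul hS Sx (sg_inv hS Ss).
  move=> nU; have [//|nSx] := pselect (S x).
  have [i Si] := cov x; exfalso; apply: nU; exists i; first by rewrite /= mem_enum.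
  rewrite /F; case: asboolP => [Sc|nSc].
    by apply: nSx; rewrite -(g_mulKVg (c i) x); by have := sg_mul hS Sc Si.
  by exists (mul (inv (c i)) x) => //; rewrite g_mulKVg.
rewrite bigcup_seq openC; apply: closed_bigsetU => i _.
rewrite /F; case: asboolP => _; first exact: closed0.
exact: g_lmul_closed.
Qed.
End TG.


Lemma coset_transversal (T : topologicalType) (mul : T -> T -> T) (inv : T -> T) (one : T)
  (hT : topological_group mul inv one) (S : set T) (hS : subgroup mul inv one S)
  (fin : finite_index mul S) :
  exists n (t : 'I_n -> T) (idx : T -> 'I_n),
   [/\ forall x, S (mul (inv (t (idx x))) x),
       forall i x, S (mul (inv (t i)) x) -> idx x = i &
       t (idx one) = one].
Proof.
have mA := tg_mulA hT.
have cosetE x y : (mul x @` S = mul y @` S) <-> S (mul (inv x) y).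
  split.
    move=> e; have : (mul y @` S) y.
      by exists one; [exact: (sg_one hS) | exact: (g_mulg1 hT)].
    by rewrite -e => -[z Sz <-]; rewrite (g_mulKg hT).
  have sub a b : S (mul (inv a) b) -> mul b @` S `<=` mul a @` S.
    move=> Sab _ [z Sz <-]; exists (mul (mul (inv a) b) z).
      by have := sg_mul hS Sab Sz.
    by rewrite mA (g_mulKVg hT).
  move=> Sxy; apply/seteqP; split; apply: sub => //.
  by have := sg_inv hS Sxy; rewrite (g_invM hT) (g_invK hT).
move: fin; rewrite /finite_index finite_seqP => -[s0 es0].
pose s := undup s0.
have us : uniq s := undup_uniq s0.
have memC x : mul x @` S \in s.
  have : [set mul x @` S | x in [set: T]] (mul x @` S) by exists x.
  by rewrite es0 /= mem_undup.
pose n := size s.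
have idxP x : index (mul x @` S) s < n by rewrite /n index_mem.
pose idx (x : T) : 'I_n := Ordinal (idxP x).
have nthC (i : 'I_n) : exists x, mul x @` S = nth set0 s i.
  have : nth set0 s i \in s by apply: mem_nth.
  rewrite mem_undup => h; have : [set` s0] (nth set0 s i) by [].
  by rewrite -es0 => -[x _ e]; exists x.
have [t0 ht0] := choice nthC.
pose t (i : 'I_n) := if i == idx one then one else t0 i.
have ht i : mul (t i) @` S = nth set0 s i.
  rewrite /t; case: eqP => [->|_]; last exact: ht0.
  by rewrite /= nth_index.
exists n, t, idx; split.
- move=> x; apply/cosetE; rewrite ht /= nth_index //.
- move=> i x /cosetE; rewrite ht => e; apply: val_inj => /=.
  by rewrite -e index_uniq.
- by rewrite /t eqxx.
Qed.


Lemma ptws_cont_at (X L : topologicalType) (I : eqType) (g : X -> {ptws I -> L}) x :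
  (forall i, {for x, continuous (fun y => g y i)}) -> {for x, continuous g}.
Proof.
move=> h; apply/cvg_sup => i.
have fs : (fun f : {ptws I -> L} => f i) @` setT = setT.
  by apply/seteqP; split => // y _; exists (fun _ => y).
apply/(@cvg_image _ _ (fun f : {ptws I -> L} => f i)); first by apply/seteqP; split => // y _; exists (fun _ => y).
move=> B nB.
exists ((fun f : {ptws I -> L} => f i) @^-1` B).
  exact: (h i B nB).
by rewrite image_preimage.
Qed.

Lemma cont_near (X Y : topologicalType) (f g : X -> Y) x :
  (\forall y \near x, g y = f y) -> {for x, continuous g} -> {for x, continuous f}.
Proof.
move=> E cg.
have fx : g x = f x := nbhs_singleton E.
apply: cvg_trans (near_eq_cvg E) _.
by rewrite -fx; exact: cg.
Qed.

Section Wreath.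
Context (L : topologicalType) (mulL : L -> L -> L) (invL : L -> L) (oneL : L)
  (hL : compact_group mulL invL oneL) (n : nat).

Local Notation Wt := (discrete_topology {perm 'I_n} * {ptws 'I_n -> L})%type.

Definition wmul (a b : Wt) : Wt :=
  (((b.1 : {perm 'I_n}) * (a.1 : {perm 'I_n}))%g,
   fun i => mulL (a.2 ((b.1 : {perm 'I_n}) i)) (b.2 i)).
Definition winv (a : Wt) : Wt :=
  (((a.1 : {perm 'I_n})^-1)%g, fun i => invL (a.2 (((a.1 : {perm 'I_n})^-1)%g i))).
Definition wone : Wt := (1%g, fun _ => oneL).

Let hLt : topological_group mulL invL oneL.
Proof. by case: hL. Qed.

Lemma W_tg : topological_group wmul winv wone.
Proof.
split.
- move=> [a f] [b g] [c h]; rewrite /wmul /=; congr pair; first by rewrite mulgA.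
  by apply: funext => i; rewrite permM (tg_mulA hLt).
- move=> [a f]; rewrite /wmul /=; congr pair; first by rewrite mulg1.
  by apply: funext => i; rewrite (tg_mul1g hLt).
- move=> [a f]; rewrite /wmul /wone /=; congr pair; first by rewrite mulgV.
  by apply: funext => i; rewrite permK (tg_mulVg hLt).
- move=> p.
  have c11 : continuous (fun q : Wt * Wt => q.1.1) := cont_comp (@cont_fst _ _) (@cont_fst _ _).
  have c21 : continuous (fun q : Wt * Wt => q.2.1) := cont_comp (@cont_snd _ _) (@cont_fst _ _).
  have c12 : continuous (fun q : Wt * Wt => q.1.2) := cont_comp (@cont_fst _ _) (@cont_snd _ _).
  have c22 : continuous (fun q : Wt * Wt => q.2.2) := cont_comp (@cont_snd _ _) (@cont_snd _ _).
  have n1 : \forall q \near p, q.1.1 = p.1.1 := c11 p _ (discrete_set1 _).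
  have n2 : \forall q \near p, q.2.1 = p.2.1 := c21 p _ (discrete_set1 _).
  pose G := fun q : Wt * Wt => ((((p.2.1 : {perm 'I_n}) * (p.1.1 : {perm 'I_n}))%g,
     fun i => mulL (q.1.2 ((p.2.1 : {perm 'I_n}) i)) (q.2.2 i)) : Wt).
  apply: (@cont_near _ _ _ G).
    by move: n1 n2; apply: filterS2 => q e1 e2; rewrite /G /wmul e1 -e2.
  rewrite /G. apply: cont_pair_at; first exact: cont_cst.
  apply: ptws_cont_at => i.
  apply: (g_mul_cont2_at hLt).
    exact: (cont_comp c12 (@proj_continuous _ _ _)).
  exact: (cont_comp c22 (@proj_continuous _ _ _)).
- move=> p.
  have n1 : \forall q \near p, q.1 = p.1 := (@cont_fst _ _) p _ (discrete_set1 _).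
  pose G := fun q : Wt => ((((p.1 : {perm 'I_n})^-1)%g,
     fun i => invL (q.2 (((p.1 : {perm 'I_n})^-1)%g i))) : Wt).
  apply: (@cont_near _ _ _ G).
    by move: n1; apply: filterS => q e1; rewrite /G /winv -e1.
  rewrite /G; apply: cont_pair_at; first exact: cont_cst.
  apply: ptws_cont_at => i.
  have c2 := cont_comp (@cont_snd (discrete_topology {perm 'I_n}) {ptws 'I_n -> L})
     (@proj_continuous _ (fun _ => L) (((p.1 : {perm 'I_n})^-1)%g i)).
  exact: (cont_comp c2 (tg_inv_cont hLt)).
Qed.

Lemma W_compact_group : compact_group wmul winv wone.
Proof.
split; first exact: W_tg.
- rewrite -setXTT; apply: compact_setX.
    apply: finite_compact; exact: (@finite_finset {perm 'I_n} setT).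
  have := @tychonoff 'I_n (fun _ => L) (fun _ => setT) (fun _ => (let: And3 _ c _ := hL in c)).
  by congr compact; apply/seteqP; split.
- apply: hausdorff_pair; first exact: discrete_hausdorff.
  apply: hausdorff_product => _; by case: hL.
Qed.
End Wreath.


Section Induced.
Context (G : topologicalType) (mulG : G -> G -> G) (invG : G -> G) (oneG : G)
  (hG : topological_group mulG invG oneG) (H : set G)
  (hH : subgroup mulG invG oneG H) (Hopen : open H)
  (n : nat) (t : 'I_n -> G) (idx : G -> 'I_n)
  (tA : forall x, H (mulG (invG (t (idx x))) x))
  (tB : forall i x, H (mulG (invG (t i)) x) -> idx x = i)
  (L : topologicalType) (mulL : L -> L -> L) (invL : L -> L) (oneL : L)
  (hL : compact_group mulL invL oneL) (alpha : set_type H -> L)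
  (calpha : continuous alpha) (halpha : group_hom (sub_mul hH) mulL alpha).

Let mA := tg_mulA hG.

Definition pH (x : G) : set_type H :=
  match pselect (H x) with
  | left hx => exist _ x (mem_set hx)
  | right _ => sub_one hH
  end.

Lemma pH_val x : H x -> val (pH x) = x.
Proof. by move=> hx; rewrite /pH; case: pselect. Qed.

Lemma pH_valK (h : set_type H) : pH (val h) = h.
Proof. by apply: val_inj; rewrite pH_val //; exact: set_valP. Qed.

Lemma pH_mul x y : H x -> H y -> sub_mul hH (pH x) (pH y) = pH (mulG x y).
Proof.
move=> hx hy; apply: val_inj; rewrite /= !pH_val //.
by have := sg_mul hH hx hy.
Qed.

Lemma pH_cont x : H x -> {for x, continuous pH}.
Proof.
move=> hx; apply: sub_cont_at.
apply: (@cont_near _ _ _ id).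
  have : nbhs x H by apply: open_nbhs_nbhs.
  by apply: filterS => y hy; rewrite pH_val.
exact: cvg_id.
Qed.

Lemma pinj g : injective (fun i => idx (mulG g (t i))).
Proof.
move=> i j /= e.
have h1 := tA (mulG g (t i)); have h2 := tA (mulG g (t j)).
rewrite e in h1.
have h3 := sg_mul hH (sg_inv hH h1) h2.
have : H (mulG (invG (t i)) (t j)).
  move: h3; rewrite (g_invM hG) (g_invK hG) (g_invM hG).
  by rewrite !mA (g_mulgK hG) (g_mulgKV hG).
move/tB => <-; apply: tB.
by rewrite (tg_mulVg hG); exact: (sg_one hH).
Qed.

Definition piG g : {perm 'I_n} := perm (@pinj g).

Definition Phi (g : G) : (discrete_topology {perm 'I_n} * {ptws 'I_n -> L})%type :=
  (piG g, fun i => alpha (pH (mulG (invG (t (idx (mulG g (t i))))) (mulG g (t i))))).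

Lemma idx_mul g g' i :
  idx (mulG (mulG g g') (t i)) = idx (mulG g (t (idx (mulG g' (t i))))).
Proof.
set j := idx (mulG g' (t i)); set k := idx (mulG g (t j)).
apply: tB.
have := sg_mul hH (tA (mulG g (t j))) (tA (mulG g' (t i))).
by rewrite -/j -/k !mA (g_mulgK hG).
Qed.

Lemma Phi_hom : group_hom mulG (@wmul L mulL n) Phi.
Proof.
move=> g g'; rewrite /Phi /wmul /=; congr pair.
  by apply/permP => i; rewrite permM !permE /= idx_mul.
apply: funext => i; rewrite permE /= -halpha pH_mul; last 2 first.
- exact: tA.
- exact: tA.
by rewrite idx_mul !mA (g_mulgK hG).
Qed.

Lemma Phi_cont : continuous Phi.
Proof.
move=> g0.
have nidx : \forall g \near g0, forall i, idx (mulG g (t i)) = idx (mulG g0 (t i)).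
  apply: filter_forall => i.
  set j := idx (mulG g0 (t i)).
  have cm : continuous (fun g => mulG (invG (t j)) (mulG g (t i))).
    exact: (g_mul_cont2 hG (@cont_cst _ _ _) (g_rmul_cont hG (a:=t i))).
  have : nbhs (mulG (invG (t j)) (mulG g0 (t i))) H.
    by apply: open_nbhs_nbhs; split => //; exact: tA.
  move/(cm g0) => hn.
  by apply: (@filterS _ _ _ ((fun g => mulG (invG (t j)) (mulG g (t i))) @^-1` H)) hn => g hg; exact: tB.
pose Gf := fun g : G => ((piG g0,
  fun i => alpha (pH (mulG (invG (t (idx (mulG g0 (t i))))) (mulG g (t i))))) :
  (discrete_topology {perm 'I_n} * {ptws 'I_n -> L})%type).
apply: (@cont_near _ _ _ Gf).
  move: nidx; apply: filterS => g e; rewrite /Gf /Phi; congr pair.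
    by apply/permP => i; rewrite !permE /= e.
  by apply: funext => i; rewrite e.
rewrite /Gf; apply: cont_pair_at; first exact: cont_cst.
apply: ptws_cont_at => i.
have cm : continuous (fun g => mulG (invG (t (idx (mulG g0 (t i))))) (mulG g (t i))).
  exact: (g_mul_cont2 hG (@cont_cst _ _ _) (g_rmul_cont hG (a:=t i))).
have := continuous_comp (cm g0) (continuous_comp (pH_cont (tA (mulG g0 (t i)))) (@calpha (pH (mulG (invG (t (idx (mulG g0 (t i))))) (mulG g0 (t i)))))).
exact.
Qed.
End Induced.


Unset Implicit Arguments. Set Strict Implicit.
Theorem proposition2p4
  (G : topologicalType) (mulG : G -> G -> G) (invG : G -> G) (oneG : G)
  (B : topologicalType) (mulB : B -> B -> B) (invB : B -> B) (oneB : B)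
  (beta : G -> B) (H : set G)
  (hG : topological_group mulG invG oneG)
  (hB : bohr_compactification mulG invG oneG mulB invB oneB beta)
  (hH : subgroup mulG invG oneG H)
  (Hclosed : closed H)
  (Hfin : finite_index mulG H) :
  exists hK : subgroup mulB invB oneB (closure (beta @` H)),
    [/\ finite_index mulB (closure (beta @` H)),
        bohr_compactification (sub_mul hH) (sub_inv hH) (sub_one hH)
          (sub_mul hK) (sub_inv hK) (sub_one hK)
          (restr_to_closure beta H) &
        connected_component (closure (beta @` H)) oneB
          = connected_component [set: B] oneB].
Proof.
have hB' := hB.
case: hB' => hBc cbeta hbeta dbeta univ.
have hBt : topological_group mulB invB oneB by case: hBc.
have beta1 : beta oneG = oneB.
  have e : mulB (beta oneG) (beta oneG) = mulB (beta oneG) oneB.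
    by rewrite -hbeta (g_mulg1 hG) (g_mulg1 hBt).
  by have := g_mulI hBt e.
have betaV x : beta (invG x) = invB (beta x).
  symmetry; apply: (g_inv_uniq hBt).
  by rewrite -hbeta (g_mulgV hG) beta1.
have hbH : subgroup mulB invB oneB (beta @` H).
  split.
  - by exists oneG; [exact: (sg_one hH) | exact: beta1].
  - move=> _ _ [x Hx <-] [y Hy <-]; exists (mulG x y); last by rewrite hbeta.
    by have := sg_mul hH Hx Hy.
  - move=> _ [x Hx <-]; exists (invG x); last by rewrite betaV.
    by have := sg_inv hH Hx.
set K := closure (beta @` H).
have hK : subgroup mulB invB oneB K := subgroup_closure hBt hbH.
have [n [t [idx [tA tB tC]]]] := coset_transversal hG hH Hfin.
have covK : forall b, exists i, K (mulB (invB (beta (t i))) b).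
  pose U := \bigcup_(i in [set` enum 'I_n]) (mulB (beta (t i)) @` K).
  have cU : closed U.
    rewrite /U bigcup_seq; apply: closed_bigsetU => i _.
    exact: (g_lmul_closed hBt (@closed_closure _ _)).
  have rU : range beta `<=` U.
    move=> _ [g _ <-]; exists (idx g); first by rewrite /= mem_enum.
    exists (beta (mulG (invG (t (idx g))) g)).
      by apply: subset_closure; exists (mulG (invG (t (idx g))) g) => //; exact: tA.
    by rewrite -hbeta (g_mulKVg hG).
  move=> b.
  have : U b.
    apply: (closure_sub_closed cU rU).
    by rewrite (dense_closureT dbeta).
  by case=> i _ [k Kk <-]; exists i; rewrite (g_mulKg hBt).
have Hopen : open H.
  apply: (subgroup_open_of_cover hG hH Hclosed (c := t)) => x.
  by exists (idx x); exact: tA.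
have Kopen : open K.
  exact: (subgroup_open_of_cover hBt hK (@closed_closure _ _) covK).
exists hK; split.
- rewrite /finite_index.
  apply: (@sub_finite_set _ _ ((fun i => mulB (beta (t i)) @` K) @` [set: 'I_n])).
    move=> _ [b _ <-]; have [i Ki] := covK b.
    by exists i => //; apply/(g_cosetE hBt _ _ hK).
  exact: finite_image.
- split.
  + split.
    * split.
      -- by move=> x y z; apply: val_inj => /=; exact: (tg_mulA hBt).
      -- by move=> x; apply: val_inj => /=; exact: (tg_mul1g hBt).
      -- by move=> x; apply: val_inj => /=; exact: (tg_mulVg hBt).
      -- apply: sub_cont => /=.
         exact: (g_mul_cont2 hBt (cont_comp (@cont_fst _ _) (@val_cont _ _))
                   (cont_comp (@cont_snd _ _) (@val_cont _ _))).
      -- apply: sub_cont => /=.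
         exact: (cont_comp (@val_cont _ _) (tg_inv_cont hBt)).
    * apply: compact_sub.
      apply: (@subclosed_compact B K setT (@closed_closure B _)) => //.
      by case: hBc => _ ? _.
    * by apply: hausdorff_sub; case: hBc => _ _ ?.
  + apply: sub_cont => /=.
    exact: (cont_comp (@val_cont _ _) cbeta).
  + by move=> x y; apply: val_inj => /=; exact: hbeta.
  + move=> O [k Ok] [V oV VO].
    have Kk : K (val k) by exact: set_valP.
    have nV : nbhs (val k) V.
      by apply: open_nbhs_nbhs; split => //; move: Ok; rewrite -VO.
    have [_ [[h Hh <-] Vh]] := Kk V nV.
    exists (restr_to_closure beta H (exist _ h (mem_set Hh))); split.
      by rewrite -VO.
    by exists (exist _ h (mem_set Hh)).
  + move=> L mulL invL oneL alpha hL calpha halpha.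
    have := univ _ _ _ _ _ (W_compact_group hL n)
      (Phi_cont (hG:=hG) (hH:=hH) (tA:=tA) (tB:=tB) Hopen calpha)
      (Phi_hom hG (hH:=hH) tA tB halpha).
    case=> Psi [cPsi ePsi].
    exists (fun k => (Psi (val k)).2 (idx oneG)); split.
      have c1 := cont_comp (@cont_snd (discrete_topology {perm 'I_n}) {ptws 'I_n -> L})
        (@proj_continuous _ (fun _ : 'I_n => L) (idx oneG)).
      have c2 := cont_comp cPsi c1.
      exact: (cont_comp (@val_cont _ K) c2).
    apply: funext => h /=.
    have := congr1 (fun f => (f (val h)).2 (idx oneG)) ePsi.
    rewrite /= => <-.
    rewrite /Phi /= tC (g_mulg1 hG).
    have -> : idx (val h) = idx oneG.
      apply: (tB (idx oneG)); rewrite tC (g_inv1 hG) (tg_mul1g hG); exact: set_valP.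
    by rewrite tC (g_inv1 hG) (tg_mul1g hG) pH_valK.
- apply/seteqP; split => y [C [C1 CK cC] Cy].
    by exists C.
  exists C => //; split => //.
  have KC : C `&` K = C.
    apply: cC.
    - by exists oneB; split => //; exact: (sg_one hK).
    - by exists K.
    - by exists K => //; exact: closed_closure.
  by rewrite -KC => z [].
Qed.
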